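(* Let $Y$ be a finite connected simple undirected graph with vertex set $\{1,\dots,n\}$, let $\pi\in S_Y$, and let $g,g'\in D_n$ with $g\neq g'$. If $[g\cdot\pi]_Y=[g'\cdot\pi]_Y$, then $Y$ is bipartite.
   Context: $S_Y$ denotes the set of permutations $\pi=(\pi_1,\dots,\pi_n)$ of the vertex set of $Y$. The update graph $U(Y)$ has vertex set $S_Y$, two permutations being adjacent if they differ exactly by swapping two consecutive entries $\pi_k,\pi_{k+1}$ with $\{\pi_k,\pi_{k+1}\}$ not an edge of $Y$; $\pi\sim_Y\pi'$ iff they lie in the same connected component of $U(Y)$, and $[\pi]_Y$ is the class of $\pi$. Let $\sigma=(n,n-1,\dots,2,1)$ and $\rho=(1,n)(2,n-1)\cdots(\lceil n/2\rceil,\lfloor n/2\rfloor+1)$ in $S_n$ (cycle notation), and $D_n=\langle\sigma,\rho\rangle$, acting on $S_Y$ by $g\cdot(\pi_1,\dots,\pi_n)=(\pi_{g^{-1}(1)},\dots,\pi_{g^{-1}(n)})$. Thus $\sigma\cdot\pi=(\pi_2,\dots,\pi_n,\pi_1)$ and $\rho\cdot\pi=(\pi_n,\dots,\pi_1)$. *)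

(* Defs.v *)
(* Graph Y on vertex set 'I_n (0-based stand-in for {1,...,n}),
   given as a boolean relation e. *)
From mathcomp Require Import all_boot all_fingroup.
Set Implicit Arguments. Unset Strict Implicit. Unset Printing Implicit Defensive.
Local Open Scope group_scope.

Definition simple_graph n (e : rel 'I_n) : Prop := symmetric e /\ irreflexive e.
Definition connected_graph n (e : rel 'I_n) : Prop := forall x y, connect e x y.
Definition bipartite n (e : rel 'I_n) : Prop :=
  exists c : 'I_n -> bool, forall x y, e x y -> c x != c y.

(* A permutation pi in S_Y is a perm sending position k to the entry pi_k. *)
Definition update_adj n (e : rel 'I_n) : rel {perm 'I_n} :=
  fun p q => [exists i : 'I_n, exists j : 'I_n,
     [&& val j == (val i).+1, ~~ e (p i) (p j) & q == tperm i j * p]].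

(* pi ~_Y pi'  iff same connected component of U(Y), i.e. [pi]_Y = [pi']_Y *)
Definition upd_equiv n (e : rel 'I_n) (p q : {perm 'I_n}) : bool :=
  connect (update_adj e) p q.

(* sigma = (n, n-1, ..., 1): i |-> i-1 cyclically; rho: i |-> n+1-i *)
Definition sigma_n n : {perm 'I_n} := perm (@ord_pred_inj n).
Definition rho_n n : {perm 'I_n} := perm (@rev_ord_inj n).
Definition dihedral n : {set {perm 'I_n}} := <<[set sigma_n n; rho_n n]>>.

(* g . pi = (pi_{g^-1(1)}, ..., pi_{g^-1(n)}), i.e. k |-> pi (g^-1 k);
   in mathcomp (s * t) x = t (s x). *)
Definition dact n (g p : {perm 'I_n}) : {perm 'I_n} := g^-1 * p.

(* Main.v *)
Require Import Defs.
From mathcomp Require Import all_boot all_fingroup zify.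
Set Implicit Arguments. Unset Strict Implicit. Unset Printing Implicit Defensive.
Local Open Scope group_scope.

Lemma ord_neq n (u v : 'I_n) : u <> v -> (u : nat) <> v.
Proof. by move=> H E; apply: H; apply: val_inj. Qed.

Lemma step_inv n (e : rel 'I_n) (q q' : {perm 'I_n}) a b :
  symmetric e -> update_adj e q q' -> e a b ->
  (q^-1 a < q^-1 b)%N = (q'^-1 a < q'^-1 b)%N.
Proof.
move=> sym /existsP[i /existsP[j /and3P[/eqP hj hne /eqP ->]]] eab.
rewrite invMg tpermV !permM.
have ha : a = q (q^-1 a) by rewrite permKV.
have hb : b = q (q^-1 b) by rewrite permKV.
move: (q^-1 a) (q^-1 b) ha hb => x y ha hb; subst a b.
move: eab.
case: (tpermP i j x) => [->|->|/ord_neq hxi /ord_neq hxj];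
case: (tpermP i j y) => [->|->|/ord_neq hyi /ord_neq hyj];
move=> eab; try by rewrite eab in hne.
all: try by rewrite sym eab in hne.
all: have hj' : nat_of_ord j = (nat_of_ord i).+1 := hj.
all: lia.
Qed.
Definition rotP n (h : {perm 'I_n}) (c : nat) := [forall k : 'I_n, h k == k + c %[mod n]].
Definition refP n (h : {perm 'I_n}) (c : nat) := [forall k : 'I_n, h k + k == c %[mod n]].
Definition affset n : {set {perm 'I_n}} :=
  [set h | [exists c : 'I_n, rotP h c || refP h c]].

Lemma eqmD n a b x y : a = b %[mod n] -> x = y %[mod n] -> a + x = b + y %[mod n].
Proof. by move=> H1 H2; rewrite -modnDm H1 H2 modnDm. Qed.

Lemma aff_nat n (h : {perm 'I_n.+1}) c : rotP h c || refP h c -> h \in affset n.+1.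
Proof.
move=> H; rewrite inE; apply/existsP; exists (Ordinal (ltn_pmod c (ltn0Sn n))) => /=.
case/orP: H => /forallP H; apply/orP; [left|right]; apply/forallP => k; move/eqP: (H k) => ->.
  by rewrite modnDmr.
by rewrite modn_mod.
Qed.

Lemma aff_mul n (h1 h2 : {perm 'I_n.+1}) c d :
  rotP h1 c || refP h1 c -> rotP h2 d || refP h2 d -> h1 * h2 \in affset n.+1.
Proof.
case/orP => /forallP H1; case/orP => /forallP H2.
- apply: (@aff_nat _ _ (c + d)); apply/orP.
  left; apply/forallP => k; rewrite permM; apply/eqP.
  rewrite (eqP (H2 (h1 k))) addnA; apply: eqmD => //; exact: (eqP (H1 k)).
- apply: (@aff_nat _ _ (d + n * c)); apply/orP.
  right; apply/forallP => k; rewrite permM; apply/eqP.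
  rewrite -(modnMDl c (_ + k)).
  have -> : c * n.+1 + (h2 (h1 k) + k) = (h2 (h1 k) + (k + c)) + n * c.
    rewrite mulnS (mulnC c n); lia.
  apply: eqmD => //; rewrite -(eqP (H2 (h1 k))).
  by apply: eqmD => //; rewrite (eqP (H1 k)).
- apply: (@aff_nat _ _ (c + d)); apply/orP.
  right; apply/forallP => k; rewrite permM; apply/eqP.
  rewrite -modnDml (eqP (H2 _)) modnDml.
  have -> : h1 k + d + k = (h1 k + k) + d by lia.
  apply: eqmD => //; exact: (eqP (H1 k)).
- apply: (@aff_nat _ _ (d + n * c)); apply/orP.
  left; apply/forallP => k; rewrite permM; apply/eqP.
  set z := h2 (h1 k).
  rewrite -(modnMDl c z).
  have -> : c * n.+1 + z = (z + c) + n * c.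
    rewrite mulnS (mulnC c n); lia.
  rewrite addnA; apply: eqmD => //.
  have E1 : z + c = z + (h1 k + k) %[mod n.+1] := eqmD (erefl _) (esym (eqP (H1 k))).
  rewrite E1 addnA.
  have E2 := eqmD (eqP (H2 (h1 k))) (erefl (k %% n.+1)).
  by rewrite E2 addnC.
Qed.

Lemma affset_group n : group_set (affset n.+1).
Proof.
apply/andP; split.
  apply: (@aff_nat _ _ 0); apply/orP; left; apply/forallP => k.
  by rewrite perm1 addn0.
apply/subsetP => x /mulsgP [a b Ha Hb ->].
rewrite inE in Ha; rewrite inE in Hb.
case/existsP: Ha => c Hc; case/existsP: Hb => d Hd.
exact: aff_mul Hc Hd.
Qed.

Canonical affG n := Group (affset_group n).

Lemma dihedral_aff n : dihedral n.+1 \subset affset n.+1.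
Proof.
rewrite /dihedral (gen_subG _ (affG n)); apply/subsetP => x Hx; rewrite !inE in Hx.
case/orP: Hx => /eqP ->.
  change (sigma_n n.+1 \in affset n.+1).
  apply: (@aff_nat _ _ n); apply/orP; left; apply/forallP => k.
  by rewrite /sigma_n permE /= addnS /= modn_mod.
change (rho_n n.+1 \in affset n.+1).
apply: (@aff_nat _ _ n); apply/orP; right; apply/forallP => k.
rewrite /rho_n permE /= subSS subnK //; have := ltn_ord k; lia.
Qed.

Lemma rot_val n (h : {perm 'I_n}) (c : 'I_n) : rotP h c ->
  forall k : 'I_n, (h k : nat) = if k + c < n then k + c else k + c - n.
Proof.
move/forallP => H k; move/eqP: (H k); rewrite (modn_small (ltn_ord (h k))) => ->.
have := ltn_ord k; have := ltn_ord c => hc hk.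
case: ifP => Hlt; first by rewrite modn_small.
have -> : k + c = (k + c - n) + n by move/negbT: Hlt; lia.
rewrite modnDr modn_small //; lia.
Qed.

Lemma ref_val n (h : {perm 'I_n}) (c : 'I_n) : refP h c ->
  forall k : 'I_n, (h k : nat) = if k <= c then c - k else c + n - k.
Proof.
move/forallP => H k; move/eqP: (H k) => E.
have := ltn_ord k; have := ltn_ord c; have := ltn_ord (h k) => hh hc hk.
case: ifP => Hle.
  have : h k + k == (c - k) + k %[mod n] by rewrite subnK // E.
  rewrite eqn_modDr => /eqP; rewrite !modn_small //; lia.
have : h k + k == (c + n - k) + k %[mod n].
  have hk' : k <= c + n by lia.
  by rewrite subnK // modnDr E.
rewrite eqn_modDr => /eqP; rewrite !modn_small //; move/negbT: Hle; lia.
Qed.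

Lemma aff_bip n (e : rel 'I_n) (h f : {perm 'I_n}) :
  irreflexive e -> connected_graph e -> h \in affset n -> h != 1 ->
  (forall a b, e a b -> (f a < f b)%N = (h (f a) < h (f b))%N) -> bipartite e.
Proof.
move=> irr conn; rewrite inE => /existsP [c /orP [Hr|Hf]] h1 H.
- exfalso.
  have c0 : 0 < c.
    rewrite lt0n; apply: contra h1 => /eqP c0.
    apply/eqP/permP => k; apply: val_inj; rewrite perm1 /= (rot_val Hr) c0 addn0 ltn_ord.
    by [].
  have hcn := ltn_ord c.
  have cl : closed e [pred a | f a + c < n].
    move=> a b eab; rewrite !inE /=; move: (H a b eab); rewrite !(rot_val Hr).
    have := ltn_ord (f a); have := ltn_ord (f b).
    case: (ltnP (f a + c) n); case: (ltnP (f b + c) n) => /= *; lia.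
  have hn0 : 0 < n by lia.
  have hn1 : n.-1 < n by lia.
  have := closed_connect cl (conn (f^-1 (Ordinal hn0)) (f^-1 (Ordinal hn1))).
  rewrite !inE /= !permKV /=; lia.
- exists (fun a => f a <= c) => a b eab; apply/negP => /eqP E.
  suff : (f a : nat) = f b.
    by move/val_inj/perm_inj => eq; rewrite eq irr in eab.
  move: E (H a b eab); rewrite !(ref_val Hf).
  have := ltn_ord (f a); have := ltn_ord (f b).
  case: (leqP (f a) c); case: (leqP (f b) c) => /= *; lia.
Qed.

Theorem proposition2 (n : nat) (e : rel 'I_n) (pi g g' : {perm 'I_n}) :
  simple_graph e -> connected_graph e ->
  g \in dihedral n -> g' \in dihedral n -> g != g' ->
  upd_equiv e (dact g pi) (dact g' pi) ->
  bipartite e.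
Proof.
case: n e pi g g' => [|n] e pi g g'.
  by move=> *; exists (fun _ => true) => x; case: x.
move=> [sym irr] conn gD g'D neq Hc.
pose P := [pred q : {perm 'I_n.+1} | [forall a, forall b, e a b ==>
   ((q^-1 a < q^-1 b)%N == ((dact g pi)^-1 a < (dact g pi)^-1 b)%N)]].
have cl : closed (update_adj e) P.
  move=> q q' hqq'; rewrite !inE /=.
  apply: eq_forallb => a; apply: eq_forallb => b.
  case eab: (e a b) => //=.
  by rewrite (step_inv sym hqq' eab).
have := closed_connect cl Hc; rewrite !inE /=.
have -> : [forall a, forall b, e a b ==>
   (((dact g pi)^-1 a < (dact g pi)^-1 b)%N == ((dact g pi)^-1 a < (dact g pi)^-1 b)%N)].
  by apply/forallP => a; apply/forallP => b; rewrite eqxx implybT.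
move/esym/forallP => key.
have hD : g^-1 * g' \in dihedral n.+1 by rewrite /dihedral groupM ?groupV.
apply: (@aff_bip _ e (g^-1 * g') (pi^-1 * g) irr conn).
- exact: (subsetP (dihedral_aff n)).
- by rewrite -eq_mulVg1.
move=> a b eab; move/forallP: (key a) => /(_ b); rewrite eab /= => /eqP.
rewrite /dact !invMg !invgK !permM !permK => ->.
done.
Qed.
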